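(* If $\sum_{n=1}^N r_n \le C_{min}$, then every packet $p^{g,j}$ of the aggregate flow has delay $d^{g,j}-a^{g,j} \le \frac{\sum_{n}\sigma_n}{C_{min}}$.
   Context: A multiclass FIFO system serves packets from $N$ classes. Class $n$ has constant service rate $C_n>0$; $C_{min}=\min_n C_n$. The aggregate flow consists of all packets $p^{g,1},p^{g,2},\dots$ in order of arrival (ties broken arbitrarily), with arrival times $0\le a^{g,1}\le a^{g,2}\le\cdots$, lengths $l^{g,j}>0$, and departure times $d^{g,j}=\max\{a^{g,j},d^{g,j-1}\}+l^{g,j}/C_{c(j)}$, $d^{g,0}=0$, $c(j)$ the class of $p^{g,j}$. $A_n(s,t)$ denotes the total length of class-$n$ packets arriving in $[s,t]$. Each class $n$ is leaky-bucket constrained: $A_n(s,t)\le r_n(t-s)+\sigma_n$ for all $0\le s\le t$, with constants $r_n,\sigma_n\ge 0$. *)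

(* Defs.v *)
From Stdlib Require Import Reals Lra Arith.
Open Scope R_scope.

Fixpoint sum_lt (f : nat -> R) (n : nat) : R :=
  match n with
  | O => 0
  | S k => sum_lt f k + f k
  end.

Fixpoint min_upto (C : nat -> R) (k : nat) : R :=
  match k with
  | O => C O
  | S k' => Rmin (min_upto C k') (C (S k'))
  end.

(* C_min = min over the classes 0..N-1 (N >= 1 assumed where used) *)
Definition Cmin (N : nat) (C : nat -> R) : R := min_upto C (N - 1).

(* Departure times of the aggregate FIFO flow; packets are indexed 1,2,...,
   d 0 = 0, d j = max(a j, d (j-1)) + l j / C (c j). *)
Fixpoint dep (C : nat -> R) (c : nat -> nat) (a l : nat -> R) (j : nat) : R :=
  match j with
  | O => 0
  | S k => Rmax (a (S k)) (dep C c a l k) + l (S k) / C (c (S k))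
  end.

(* Total length of class-n packets among p^{g,1..M} arriving in [s,t].
   A_n(s,t) is the supremum over M of these partial sums. *)
Definition arr_upto (c : nat -> nat) (a l : nat -> R) (n : nat) (s t : R)
  (M : nat) : R :=
  sum_lt (fun i =>
    if Nat.eq_dec (c (S i)) n then
      if Rle_dec s (a (S i)) then
        if Rle_dec (a (S i)) t then l (S i) else 0
      else 0
    else 0) M.

(* Main.v *)
Require Import Defs.
From Stdlib Require Import Reals Lra Lia.
Open Scope R_scope.

Lemma sum_lt_le (f g : nat -> R) M :
  (forall i, (i < M)%nat -> f i <= g i) -> sum_lt f M <= sum_lt g M.
Proof.
  induction M; simpl; intros H; [lra|].
  assert (sum_lt f M <= sum_lt g M) by (apply IHM; intros; apply H; lia).
  assert (f M <= g M) by (apply H; lia). lra.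
Qed.

Lemma sum_lt_nonneg (f : nat -> R) M :
  (forall i, (i < M)%nat -> 0 <= f i) -> 0 <= sum_lt f M.
Proof.
  intros H. assert (sum_lt (fun _ => 0) M = 0) as E.
  { induction M; simpl; auto. rewrite IHM; [lra|]. intros; apply H; lia. }
  rewrite <- E. apply sum_lt_le. auto.
Qed.

Lemma sum_lt_plus (f g : nat -> R) M :
  sum_lt (fun i => f i + g i) M = sum_lt f M + sum_lt g M.
Proof. induction M; simpl; [lra|]. rewrite IHM; lra. Qed.

Lemma sum_lt_lin (f g : nat -> R) t M :
  sum_lt (fun i => f i * t + g i) M = t * sum_lt f M + sum_lt g M.
Proof. induction M; simpl; [lra|]. rewrite IHM; lra. Qed.

Lemma sum_lt_swap (F : nat -> nat -> R) N M :
  sum_lt (fun i => sum_lt (fun n => F n i) N) M = sum_lt (fun n => sum_lt (F n) M) N.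
Proof.
  induction M; simpl.
  - induction N; simpl; [lra|]. rewrite <- IHN; lra.
  - rewrite IHM. rewrite <- sum_lt_plus. reflexivity.
Qed.

Lemma sum_lt_delta m x N : (m < N)%nat ->
  sum_lt (fun n => if Nat.eq_dec m n then x else 0) N = x.
Proof.
  induction N; intros H; [lia|]. simpl.
  destruct (Nat.eq_dec m N).
  - subst. assert (sum_lt (fun n => if Nat.eq_dec N n then x else 0) N = 0).
    { clear IHN H. assert (forall K, (K <= N)%nat ->
        sum_lt (fun n => if Nat.eq_dec N n then x else 0) K = 0).
      { induction K; intros; simpl; auto. rewrite IHK by lia.
        destruct (Nat.eq_dec N K); [lia|lra]. }
      apply H; lia. }
    lra.
  - rewrite IHN by lia. lra.
Qed.

Lemma min_upto_le C k n : (n <= k)%nat -> min_upto C k <= C n.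
Proof.
  induction k; intros H; simpl.
  - assert (n = 0%nat) by lia; subst; lra.
  - destruct (Nat.eq_dec n (S k)).
    + subst. apply Rmin_r.
    + eapply Rle_trans; [apply Rmin_l|]. apply IHk; lia.
Qed.

Lemma min_upto_pos C k : (forall n, (n <= k)%nat -> 0 < C n) -> 0 < min_upto C k.
Proof.
  induction k; intros H; simpl.
  - apply H; lia.
  - apply Rmin_glb_lt; [apply IHk; intros; apply H; lia| apply H; lia].
Qed.

Theorem corollary1
  (N : nat) (C r sigma : nat -> R) (c : nat -> nat) (a l : nat -> R)
  (HN : (1 <= N)%nat)
  (HC : forall n, (n < N)%nat -> 0 < C n)
  (Hr : forall n, (n < N)%nat -> 0 <= r n)
  (Hsig : forall n, (n < N)%nat -> 0 <= sigma n)
  (Hclass : forall j, (1 <= j)%nat -> (c j < N)%nat)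
  (Ha0 : 0 <= a 1%nat)
  (Hmono : forall j, (1 <= j)%nat -> a j <= a (S j))
  (Hl : forall j, (1 <= j)%nat -> 0 < l j)
  (Hlb : forall n, (n < N)%nat -> forall s t, 0 <= s -> s <= t ->
           forall M, arr_upto c a l n s t M <= r n * (t - s) + sigma n)
  (Hrate : sum_lt r N <= Cmin N C) :
  forall j, (1 <= j)%nat ->
    dep C c a l j - a j <= sum_lt sigma N / Cmin N C.
Proof.
  set (m := Cmin N C).
  assert (Hm : 0 < m) by (apply min_upto_pos; intros; apply HC; lia).
  assert (HmC : forall j, (1 <= j)%nat -> m <= C (c j)).
  { intros j Hj. apply min_upto_le. specialize (Hclass j Hj). lia. }
  assert (Hlc : forall j, (1 <= j)%nat -> m * (l j / C (c j)) <= l j).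
  { intros j Hj. specialize (HmC j Hj). specialize (Hl j Hj).
    assert (0 < C (c j)) by lra.
    apply Rmult_le_reg_r with (C (c j)); auto.
    replace (m * (l j / C (c j)) * C (c j)) with (m * l j) by (field; lra).
    nra. }
  assert (Hmon : forall k d, (1 <= k)%nat -> a k <= a (k + d)%nat).
  { intros k d Hk. induction d. rewrite Nat.add_0_r; lra.
    replace (k + S d)%nat with (S (k + d)) by lia.
    eapply Rle_trans; [apply IHd|]. apply Hmono; lia. }
  assert (Hmon' : forall k j, (1 <= k)%nat -> (k <= j)%nat -> a k <= a j).
  { intros k j Hk Hkj. replace j with (k + (j - k))%nat by lia. auto. }
  set (g := fun k i => if Compare_dec.le_dec k (S i) then l (S i) else 0).
  assert (Hg0 : forall k i, 0 <= g k i).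
  { intros k i; unfold g; destruct Compare_dec.le_dec; [left; apply Hl; lia|lra]. }
  assert (Inv : forall j, (1 <= j)%nat -> exists k, (1 <= k <= j)%nat /\
             m * (dep C c a l j - a k) <= sum_lt (g k) j).
  { induction j as [|j IH]; intros Hj; [lia|].
    destruct (Nat.eq_dec j 0) as [->|Hj0].
    - exists 1%nat. split; [lia|]. simpl. rewrite Rmax_left by lra.
      unfold g at 1; destruct Compare_dec.le_dec; [|lia].
      specialize (Hlc 1%nat ltac:(lia)). lra.
    - destruct (IH ltac:(lia)) as [k [Hk Hinv]].
      simpl dep.
      destruct (Rle_dec (dep C c a l j) (a (S j))) as [Hle|Hgt].
      + exists (S j). split; [lia|]. rewrite Rmax_left by lra.
        simpl. unfold g at 2; destruct Compare_dec.le_dec; [|lia].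
        assert (0 <= sum_lt (g (S j)) j) by (apply sum_lt_nonneg; auto).
        specialize (Hlc (S j) ltac:(lia)). lra.
      + exists k. split; [lia|]. rewrite Rmax_right by lra.
        simpl. unfold g at 2; destruct Compare_dec.le_dec; [|lia].
        specialize (Hlc (S j) ltac:(lia)). lra. }
  intros j Hj. destruct (Inv j Hj) as [k [Hk Hinv]].
  assert (Hak : 0 <= a k) by (apply Rle_trans with (a 1%nat); auto; apply Hmon'; lia).
  assert (Hakj : a k <= a j) by (apply Hmon'; lia).
  assert (Hsum : sum_lt (g k) j <=
     sum_lt (fun n => arr_upto c a l n (a k) (a j) j) N).
  { unfold arr_upto. rewrite <- sum_lt_swap. apply sum_lt_le. intros i Hi.
    rewrite sum_lt_delta by (apply Hclass; lia).
    unfold g. destruct Compare_dec.le_dec.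
    - destruct Rle_dec as [_|n0]; [|exfalso; apply n0; apply Hmon'; lia].
      destruct Rle_dec as [_|n0]; [lra|exfalso; apply n0; apply Hmon'; lia].
    - destruct Rle_dec; [destruct Rle_dec|]; try lra. left; apply Hl; lia. }
  assert (Hb : sum_lt (fun n => arr_upto c a l n (a k) (a j) j) N <=
     sum_lt (fun n => r n * (a j - a k) + sigma n) N).
  { apply sum_lt_le. intros. apply Hlb; auto. }
  rewrite sum_lt_lin in Hb.
  assert (0 <= sum_lt r N) by (apply sum_lt_nonneg; auto).
  assert (m * (dep C c a l j - a j) <= sum_lt sigma N).
  { fold m in Hrate. nra. }
  apply Rmult_le_reg_l with m; auto.
  replace (m * (sum_lt sigma N / m)) with (sum_lt sigma N) by (field; lra). lra.
Qed.
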